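(* For $n=1,2,3,4$ the minimal norm of a linear interpolation projector on the unit ball satisfies $\theta_1(B_1)=1$, $\theta_2(B_2)=\frac53$, $\theta_3(B_3)=2$, $\theta_4(B_4)=\frac{11}5$, i.e. $\theta_n(B_n)=3-\frac4{n+1}$; moreover, for $n\le4$ an interpolation projector $P:C(B_n)\to\Pi_1(\mathbb R^n)$ with nodes in $B_n$ satisfies $\|P\|_{B_n}=\theta_n(B_n)$ only if its nodes are the vertices of a regular simplex inscribed into $B_n$.
   Context: $B_n$ is the closed unit Euclidean ball in $\mathbb R^n$. $C(B_n)$ is the space of continuous functions with sup norm; $\Pi_1(\mathbb R^n)$ the space of polynomials of degree $\le1$. For nodes $x^{(1)},\dots,x^{(n+1)}\in B_n$ forming a nondegenerate simplex, the interpolation projector $P$ maps $f$ to the unique $p\in\Pi_1(\mathbb R^n)$ with $p(x^{(j)})=f(x^{(j)})$; $\|P\|_{B_n}$ is its operator norm. $\theta_n(B_n)$ is the minimum of $\|P\|_{B_n}$ over all such projectors. A simplex is inscribed into $B_n$ if its vertices lie on the unit sphere. *)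

(* Defs.v *)
From HB Require Import structures.
From mathcomp Require Import all_boot all_order all_algebra.
From mathcomp Require Import boolp classical_sets reals.
Set Implicit Arguments.
Unset Strict Implicit.
Unset Printing Implicit Defensive.
Import Order.TTheory GRing.Theory Num.Theory.
Local Open Scope ring_scope.
Local Open Scope classical_set_scope.

Section Defs.
Variable R : realType.

Definition dotv (n : nat) (x y : 'rV[R]_n) : R := \sum_(i < n) x 0 i * y 0 i.
Definition enorm (n : nat) (x : 'rV[R]_n) : R := Num.sqrt (dotv x x).

Definition in_ball (n : nat) (x : 'rV[R]_n) : Prop := enorm x <= 1.

Definition cont_on_ball (n : nat) (f : 'rV[R]_n -> R) : Prop :=
  forall x, in_ball x -> forall e : R, 0 < e ->
    exists2 d : R, 0 < d &
      forall y, in_ball y -> enorm (y - x) < d -> `|f y - f x| < e.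

Definition affine_eval (n : nat) (a : 'rV[R]_n) (c : R) (x : 'rV[R]_n) : R :=
  c + dotv a x.

(* Nodes x^(1..n+1) form a nondeg_simplex simplex: the matrix with rows
   (x^(j), 1) is invertible. *)
Definition node_matrix (n : nat) (X : 'I_n.+1 -> 'rV[R]_n) : 'M[R]_(n.+1, n.+1) :=
  \matrix_(j < n.+1, k < n.+1)
    (if (k < n)%N as b return ((k < n)%N = b -> R) then
        fun h => X j 0 (Ordinal h) else fun _ => 1) (erefl _).
Definition nondeg_simplex (n : nat) (X : 'I_n.+1 -> 'rV[R]_n) : Prop :=
  \det (node_matrix X) != 0.

Definition nodes_in_ball (n : nat) (X : 'I_n.+1 -> 'rV[R]_n) : Prop :=
  forall j, in_ball (X j).

(* Operator norm ||P||_{B_n} of the interpolation projector with nodes X: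
   sup of |(Pf)(x)| over x in B_n and f in C(B_n) with ||f||_{C(B_n)} <= 1,
   where Pf is the (unique, by nondegeneracy) p in Pi_1 with p(X j) = f(X j). *)
Definition proj_norm (n : nat) (X : 'I_n.+1 -> 'rV[R]_n) : R :=
  sup [set r | exists (f : 'rV[R]_n -> R) (a : 'rV[R]_n) (c : R) (x : 'rV[R]_n),
        [/\ cont_on_ball f,
            (forall y, in_ball y -> `|f y| <= 1),
            (forall j, affine_eval a c (X j) = f (X j)),
            in_ball x &
            r = `|affine_eval a c x| ] ].

Definition theta_ball (n : nat) : R :=
  inf [set r | exists X : 'I_n.+1 -> 'rV[R]_n,
        [/\ nondeg_simplex X, nodes_in_ball X & r = proj_norm X] ].

Definition regular_inscribed (n : nat) (X : 'I_n.+1 -> 'rV[R]_n) : Prop :=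
  (forall j, enorm (X j) = 1) /\
  (forall i j k l, i != j -> k != l -> enorm (X i - X j) = enorm (X k - X l)).

End Defs.

(* Main.v *)
Require Import Defs.
From HB Require Import structures.
From mathcomp Require Import all_boot all_order all_algebra.
From mathcomp Require Import boolp classical_sets reals.
From mathcomp Require Import ring lra.
Import Order.TTheory GRing.Theory Num.Theory.
Local Open Scope ring_scope.

Lemma natfact (R : realType) (a b : nat) : (1 <= a <= 4)%N -> (b <= a.+1)%N ->
  (a%:R * b%:R * (a%:R + 1 - b%:R) <= (a%:R - 1 + b%:R) ^+ 2 :> R).
Proof.
case: a => [//|[|[|[|[|//]]]]] _;
case: b => [|[|[|[|[|[|//]]]]]] _; rewrite ?expr2; lra.
Qed.

Section S.
Variable R : realType.
Variable n : nat.
Implicit Types (u v x y : 'rV[R]_n).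

Lemma dotvC u v : dotv u v = dotv v u.
Proof. by apply: eq_bigr => i _; rewrite mulrC. Qed.
Lemma dotvDl u v x : dotv (u + v) x = dotv u x + dotv v x.
Proof. by rewrite /dotv -big_split; apply: eq_bigr => i _; rewrite mxE mulrDl. Qed.
Lemma dotvZl k u x : dotv (k *: u) x = k * dotv u x.
Proof. by rewrite /dotv mulr_sumr; apply: eq_bigr => i _; rewrite mxE mulrA. Qed.
Lemma dotvNl u x : dotv (- u) x = - dotv u x.
Proof. by rewrite -scaleN1r dotvZl mulN1r. Qed.
Lemma dotvBl u v x : dotv (u - v) x = dotv u x - dotv v x.
Proof. by rewrite dotvDl dotvNl. Qed.
Lemma dotv0l x : dotv 0 x = 0.
Proof. by rewrite /dotv big1 // => i _; rewrite mxE mul0r. Qed.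
Lemma dotv_suml (I : finType) (F : I -> 'rV[R]_n) x :
  dotv (\sum_i F i) x = \sum_i dotv (F i) x.
Proof.
rewrite /dotv exchange_big /=; apply: eq_bigr => i _.
by rewrite summxE mulr_suml.
Qed.
Lemma dotvDr u v x : dotv x (u + v) = dotv x u + dotv x v.
Proof. by rewrite dotvC dotvDl !(dotvC x). Qed.
Lemma dotvZr k u x : dotv x (k *: u) = k * dotv x u.
Proof. by rewrite dotvC dotvZl dotvC. Qed.
Lemma dotvBr u v x : dotv x (u - v) = dotv x u - dotv x v.
Proof. by rewrite dotvC dotvBl !(dotvC x). Qed.
Lemma dotv_ge0 u : 0 <= dotv u u.
Proof. by apply: sumr_ge0 => i _; rewrite -expr2 sqr_ge0. Qed.
Lemma dotv_eq0 u : dotv u u = 0 -> u = 0.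
Proof.
move=> /eqP; rewrite psumr_eq0 => [/allP H|i _]; last by rewrite -expr2 sqr_ge0.
apply/rowP => i; rewrite mxE; apply/eqP.
by have := H i (mem_index_enum _); rewrite -expr2 sqrf_eq0.
Qed.
Lemma enorm_sqr u : enorm u ^+ 2 = dotv u u.
Proof. by rewrite /enorm sqr_sqrtr // dotv_ge0. Qed.
Lemma enorm_ge0 u : 0 <= enorm u.
Proof. exact: sqrtr_ge0. Qed.

Lemma CS_sqr u x : dotv u x ^+ 2 <= dotv u u * dotv x x.
Proof.
have [x0|xn0] := eqVneq (dotv x x) 0.
  by have -> := dotv_eq0 x x0; rewrite dotvC !dotv0l expr0n mulr0.
have xp : 0 < dotv x x by rewrite lt_def xn0 dotv_ge0.
have := dotv_ge0 (dotv x x *: u - dotv u x *: x).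
rewrite !(dotvBl, dotvBr, dotvZl, dotvZr) (dotvC x u) => H.
have : 0 <= dotv x x * (dotv u u * dotv x x - dotv u x ^+ 2) by nra.
by rewrite pmulr_rge0 // subr_ge0.
Qed.

Lemma CS u x : `|dotv u x| <= enorm u * enorm x.
Proof.
rewrite -(@ler_pXn2r _ 2) ?nnegrE ?mulr_ge0 ?enorm_ge0 //.
by rewrite exprMn !enorm_sqr real_normK ?num_real // CS_sqr.
Qed.
Lemma nm_widen (X : 'I_n.+1 -> 'rV[R]_n) j (i : 'I_n) :
  node_matrix X j (widen_ord (leqnSn n) i) = X j 0 i.
Proof.
rewrite mxE /=.
generalize (erefl (i < n)%N); generalize (i < n)%N at 2 3 as b.
case=> e; last by rewrite ltn_ord in e.
by congr (X j 0 _); apply: val_inj.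
Qed.
Lemma nm_max (X : 'I_n.+1 -> 'rV[R]_n) j :
  node_matrix X j ord_max = 1.
Proof.
rewrite mxE /=.
generalize (erefl (n < n)%N); generalize (n < n)%N at 2 3 as b.
case=> e //; have := e; by rewrite ltnn.
Qed.
Definition wA (w : 'cV[R]_n.+1) : 'rV[R]_n := \row_i w (widen_ord (leqnSn n) i) 0.
Definition wC (w : 'cV[R]_n.+1) : R := w ord_max 0.
Definition mkw (a : 'rV[R]_n) (c : R) : 'cV[R]_n.+1 :=
  \col_k (if unlift ord_max k is Some i then a 0 i else c).
Lemma wA_mkw a c : wA (mkw a c) = a.
Proof.
apply/rowP => i; rewrite !mxE.
have -> : widen_ord (leqnSn n) i = lift ord_max i by apply: val_inj; exact: (esym (lift_max i)).
by rewrite liftK.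
Qed.
Lemma wC_mkw a c : wC (mkw a c) = c.
Proof. by rewrite /wC mxE unlift_none. Qed.
Lemma nm_mul (X : 'I_n.+1 -> 'rV[R]_n) w j :
  (node_matrix X *m w) j 0 = affine_eval (wA w) (wC w) (X j).
Proof.
rewrite mxE big_ord_recr /= nm_max mul1r /affine_eval addrC /dotv /wC.
by congr (_ + _); apply: eq_bigr => i _; rewrite nm_widen mxE mulrC.
Qed.
Lemma aff00 (x : 'rV[R]_n) : affine_eval 0 0 x = 0.
Proof. by rewrite /affine_eval dotv0l addr0. Qed.

Lemma F2 (X : 'I_n.+1 -> 'rV[R]_n) a c : nondeg_simplex X ->
  (forall k, affine_eval a c (X k) = 0) -> a = 0 /\ c = 0.
Proof.
move=> nd H.
have uM : node_matrix X \in unitmx by rewrite unitmxE unitfE.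
have M0 : node_matrix X *m mkw a c = 0.
  by apply/matrixP => k l; rewrite ord1 nm_mul wA_mkw wC_mkw H mxE.
have w0 : mkw a c = 0 by rewrite -(mulKmx uM (mkw a c)) M0 mulmx0.
split; first by rewrite -(wA_mkw a c) w0; apply/rowP => i; rewrite !mxE.
by rewrite -(wC_mkw a c) w0 /wC mxE.
Qed.

Lemma F1 (X : 'I_n.+1 -> 'rV[R]_n) : nondeg_simplex X ->
  exists A : 'I_n.+1 -> 'rV[R]_n, exists C : 'I_n.+1 -> R,
    forall j k, affine_eval (A j) (C j) (X k) = (k == j)%:R.
Proof.
move=> nd.
have uM : node_matrix X \in unitmx by rewrite unitmxE unitfE.
exists (fun j => wA (invmx (node_matrix X) *m (delta_mx j (0 : 'I_1) : 'cV[R]_n.+1))).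
exists (fun j => wC (invmx (node_matrix X) *m (delta_mx j (0 : 'I_1) : 'cV[R]_n.+1))).
move=> j k; rewrite -nm_mul (mulKVmx uM) mxE.
by rewrite eqxx andbT.
Qed.

Lemma aff_lin (I : finType) (a : 'rV[R]_n) c (f : I -> R) A C y :
  affine_eval (a - \sum_j f j *: A j) (c - \sum_j f j * C j) y =
  affine_eval a c y - \sum_j f j * affine_eval (A j) (C j) y.
Proof.
rewrite /affine_eval dotvBl dotv_suml.
under [X in _ = _ - X]eq_bigr => j _ do rewrite mulrDr.
rewrite big_split /=.
under [X in dotv a y - X]eq_bigr => j _ do rewrite dotvZl.
ring.
Qed.

Lemma F3 (X : 'I_n.+1 -> 'rV[R]_n) A C : nondeg_simplex X ->
  (forall j k, affine_eval (A j) (C j) (X k) = (k == j)%:R) ->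
  forall a c x, affine_eval a c x =
     \sum_j affine_eval a c (X j) * affine_eval (A j) (C j) x.
Proof.
move=> nd HA a c x.
set f := fun j => affine_eval a c (X j).
have [a0 c0] : (a - \sum_j f j *: A j) = 0 /\ (c - \sum_j f j * C j) = 0.
  apply: (@F2 X _ _ nd) => k; rewrite aff_lin.
  rewrite (bigD1 k) //= HA eqxx mulr1 big1 ?addr0 ?subrr // => j /negbTE.
  by rewrite HA eq_sym => ->; rewrite mulr0.
have := @aff_lin _ a c f A C x; rewrite a0 c0 aff00 => /eqP.
by rewrite eq_sym subr_eq0 => /eqP.
Qed.

Definition clamp (z : R) := (`|z + 1| - `|z - 1|) / 2.
Lemma clamp_lip (u v : R) : `|clamp u - clamp v| <= `|u - v|.
Proof.
rewrite /clamp -mulrBl normrM normfV normr_nat ler_pdivrMr //.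
have e : `|u + 1| - `|u - 1| - (`|v + 1| - `|v - 1|) =
   (`|u + 1| - `|v + 1|) - (`|u - 1| - `|v - 1|) by ring.
rewrite e (le_trans (ler_normB _ _)) //.
have h1 := ler_dist_dist (u + 1) (v + 1).
have h2 := ler_dist_dist (u - 1) (v - 1).
rewrite (_ : u + 1 - (v + 1) = u - v) in h1; last by ring.
rewrite (_ : u - 1 - (v - 1) = u - v) in h2; last by ring.
lra.
Qed.
Lemma clamp_bnd (u : R) : `|clamp u| <= 1.
Proof.
rewrite /clamp normrM normfV normr_nat ler_pdivrMr // mul1r.
have := ler_dist_dist (u + 1) (u - 1).
rewrite (_ : u + 1 - (u - 1) = 2); last by ring.
by rewrite normr_nat.
Qed.
Lemma clamp_pm (b : bool) : clamp (1 - 2 * b%:R) = 1 - 2 * b%:R.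
Proof.
case: b; rewrite /clamp /=.
  have -> : 1 - 2 * 1 + 1 = 0 :> R by ring.
  have -> : 1 - 2 * 1 - 1 = -2 :> R by ring.
  by rewrite normr0 normrN ger0_norm //; field.
have -> : 1 - 2 * 0 + 1 = 2 :> R by ring.
have -> : 1 - 2 * 0 - 1 = 0 :> R by ring.
by rewrite normr0 ger0_norm //; field.
Qed.

Lemma enormZ k (u : 'rV[R]_n) : enorm (k *: u) = `|k| * enorm u.
Proof.
by rewrite /enorm dotvZl dotvZr mulrA -expr2 sqrtrM ?sqr_ge0 // sqrtr_sqr.
Qed.
Lemma enorm0 : enorm (0 : 'rV[R]_n) = 0.
Proof. by rewrite /enorm dotv0l sqrtr0. Qed.

Lemma aff_bnd a c (x : 'rV[R]_n) : in_ball x ->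
  `|affine_eval a c x| <= `|c| + enorm a.
Proof.
move=> hx; rewrite /affine_eval (le_trans (ler_normD _ _)) // lerD2l.
rewrite (le_trans (CS _ _)) // ler_piMr ?enorm_ge0 //.
Qed.

Lemma per_j (X : 'I_n.+1 -> 'rV[R]_n) A C : nondeg_simplex X -> nodes_in_ball X ->
  (forall j k, affine_eval (A j) (C j) (X k) = (k == j)%:R) ->
  forall j, 2 * (enorm (A j) + dotv (A j) (X j)) - 1 <= proj_norm X.
Proof.
move=> nd inb HA j.
have ub : has_ubound [set r | exists (f : 'rV[R]_n -> R) (a : 'rV[R]_n) (c : R) (x : 'rV[R]_n),
        [/\ cont_on_ball f,
            (forall y, in_ball y -> `|f y| <= 1),
            (forall j, affine_eval a c (X j) = f (X j)),
            in_ball x &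
            r = `|affine_eval a c x| ] ].
  exists (\sum_k (`|C k| + enorm (A k))) => r [f [a [c [x [_ fb fi xb ->]]]]].
  rewrite (@F3 X A C nd HA) (le_trans (ler_norm_sum _ _ _)) //.
  apply: ler_sum => k _; rewrite normrM fi.
  rewrite -[X in _ <= X]mul1r ler_pM ?normr_ge0 ?fb ?inb ?aff_bnd //.
set a := A j; set c := C j; set na := enorm a; set d := dotv a (X j).
have hc : c = 1 - d.
  have := HA j j; rewrite eqxx /affine_eval -/c -/d /= => h; lra.
set x0 := (- na^-1) *: a.
have hx0 : dotv a x0 = - na.
  rewrite dotvZr -enorm_sqr -/na.
  have [->|nz] := eqVneq na 0; first by rewrite invr0 oppr0 mul0r.
  by rewrite mulNr expr2 mulKf.
have bx0 : in_ball x0.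
  rewrite /in_ball /x0 enormZ normrN -/na.
  have [->|nz] := eqVneq na 0; first by rewrite invr0 normr0 mul0r.
  by rewrite ger0_norm ?invr_ge0 ?enorm_ge0 // mulVf.
set g := fun y => affine_eval (-2 *: a) (1 - 2 * c) y.
have hg : forall y, g y = 1 - 2 * affine_eval a c y.
  by move=> y; rewrite /g /affine_eval dotvZl; ring.
rewrite /proj_norm; apply: (@le_trans _ _ (`|g x0|)); last first.
  apply: (ub_le_sup ub) => /=.
  exists (fun y => clamp (g y)), (-2 *: a), (1 - 2 * c), x0; split.
  - move=> x _ e e0.
    exists (e / (2 * na + 1)).
      by rewrite divr_gt0 // ltr_wpDl // mulr_ge0 // enorm_ge0.
    move=> y _ hy.
    apply: le_lt_trans (clamp_lip _ _) _.
    rewrite !hg /affine_eval.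
    have -> : 1 - 2 * (c + dotv a y) - (1 - 2 * (c + dotv a x)) =
       - 2 * (dotv a y - dotv a x) by ring.
    rewrite -dotvBr normrM normrN normr_nat.
    have hn := CS a (y - x).
    have p : 0 < 2 * na + 1 by rewrite ltr_wpDl // mulr_ge0 // enorm_ge0.
    have hy' : enorm (y - x) * (2 * na + 1) < e by rewrite -ltr_pdivlMr.
    have := enorm_ge0 (y - x); rewrite -/na in hn; nra.
  - by move=> y _; apply: clamp_bnd.
  - by move=> k; rewrite -/(g (X k)) hg HA clamp_pm.
  - exact: bx0.
  - reflexivity.
rewrite hg /affine_eval hx0 hc.
apply: le_trans (ler_norm _); rewrite /d; lra.
Qed.

Lemma dotv0r (x : 'rV[R]_n) : dotv x 0 = 0.
Proof. by rewrite dotvC dotv0l. Qed.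

Lemma sumC (X : 'I_n.+1 -> 'rV[R]_n) A C : nondeg_simplex X ->
  (forall j k, affine_eval (A j) (C j) (X k) = (k == j)%:R) ->
  \sum_j C j = 1.
Proof.
move=> nd HA.
have := @F3 X A C nd HA 0 1 0.
rewrite /affine_eval dotv0l addr0 => ->.
by apply: eq_bigr => j _; rewrite dotv0l addr0 dotv0r addr0 mul1r.
Qed.

Lemma sumd (X : 'I_n.+1 -> 'rV[R]_n) A C : nondeg_simplex X ->
  (forall j k, affine_eval (A j) (C j) (X k) = (k == j)%:R) ->
  \sum_j dotv (A j) (X j) = n%:R.
Proof.
move=> nd HA.
have e : \sum_j (C j + dotv (A j) (X j)) = (n.+1)%:R.
  under eq_bigr => j _ do rewrite -/(affine_eval _ _ _) HA eqxx.
  by rewrite sumr_const card_ord.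
move: e; rewrite big_split /= (@sumC X A C nd HA) => e.
by apply: (addrI 1); rewrite e -natr1 addrC.
Qed.

Lemma d_le (X : 'I_n.+1 -> 'rV[R]_n) (a : 'rV[R]_n) j : nodes_in_ball X ->
  dotv a (X j) <= enorm a.
Proof.
move=> inb; apply: le_trans (ler_norm _) _; apply: le_trans (CS _ _) _.
by rewrite ler_piMr ?enorm_ge0 ?inb.
Qed.

Lemma lower (X : 'I_n.+1 -> 'rV[R]_n) : nondeg_simplex X -> nodes_in_ball X ->
  3 - 4 / (n.+1)%:R <= proj_norm X.
Proof.
move=> nd inb; have [A [C HA]] := @F1 X nd.
have hs : \sum_j (2 * (enorm (A j) + dotv (A j) (X j)) - 1) <= \sum_(j < n.+1) proj_norm X.
  by apply: ler_sum => j _; apply: per_j.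
rewrite sumr_const card_ord sumrB -mulr_sumr big_split /= (@sumd X A C nd HA) sumr_const card_ord in hs.
have hS : n%:R <= \sum_j enorm (A j).
  by rewrite -(@sumd X A C nd HA); apply: ler_sum => j _; apply: d_le.
move: hs hS; set S := \sum_j _; set N := proj_norm X => hs hS.
rewrite -mulr_natl in hs.
have hk : (n.+1)%:R = n%:R + 1 :> R by rewrite -natr1.
rewrite hk in hs *.
have kp : 0 < n%:R + 1 :> R by rewrite ltr_wpDl.
rewrite -(ler_pM2l kp).
have -> : (n%:R + 1) * (3 - 4 / (n%:R + 1)) = 3 * (n%:R + 1) - 4 :> R.
  by field; rewrite gt_eqF.
lra.
Qed.

Lemma eq_case (X : 'I_n.+1 -> 'rV[R]_n) : (0 < n)%N -> nondeg_simplex X -> nodes_in_ball X ->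
  proj_norm X = 3 - 4 / (n.+1)%:R -> regular_inscribed X.
Proof.
move=> n0 nd inb hN; have [A [C HA]] := @F1 X nd.
set m : R := n%:R / (n%:R + 1).
have np : 0 < n%:R :> R by rewrite ltr0n.
have kp : 0 < n%:R + 1 :> R by rewrite ltr_wpDl.
have hk : (n.+1)%:R = n%:R + 1 :> R by rewrite -natr1.
have hv : 3 - 4 / (n.+1)%:R = 4 * m - 1.
  by rewrite hk /m; field; rewrite gt_eqF.
have mp : 0 < m by rewrite /m divr_gt0.
have tj : forall j, 0 <= 2 * m - enorm (A j) - dotv (A j) (X j).
  by move=> j; have := @per_j X A C nd inb HA j; rewrite hN hv; lra.
have sj : forall j, 0 <= enorm (A j) - dotv (A j) (X j).
  by move=> j; rewrite subr_ge0 d_le.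
have hsum : \sum_(j < n.+1) ((2 * m - enorm (A j) - dotv (A j) (X j)) +
                    (enorm (A j) - dotv (A j) (X j))) = 0.
  have -> : \sum_(j < n.+1) ((2 * m - enorm (A j) - dotv (A j) (X j)) +
                    (enorm (A j) - dotv (A j) (X j))) =
            \sum_(j < n.+1) (2 * m) - 2 * \sum_(j < n.+1) dotv (A j) (X j).
    rewrite mulr_sumr -sumrB; apply: eq_bigr => j _; ring.
  rewrite (@sumd X A C nd HA) sumr_const card_ord -[2 * m *+ _]mulr_natl hk /m.
  by field; rewrite gt_eqF.
have H0 : forall j, enorm (A j) = m /\ dotv (A j) (X j) = m.
  move=> j.
  have := @psumr_eq0P _ _ predT _ (fun j _ => addr_ge0 (tj j) (sj j)) hsum j isT.
  have := tj j; have := sj j; lra.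
have HX1 : forall j, enorm (X j) = 1.
  move=> j; have [e1 e2] := H0 j.
  have h := CS (A j) (X j); rewrite e1 e2 (ger0_norm (ltW mp)) in h.
  apply/eqP; rewrite eq_le inb /=.
  by rewrite -(ler_pM2l mp) mulr1.
have HA' : forall j, A j = m *: X j.
  move=> j; have [e1 e2] := H0 j; apply/eqP; rewrite -subr_eq0; apply/eqP.
  apply: dotv_eq0.
  rewrite !(dotvBl, dotvBr, dotvZl, dotvZr) (dotvC (X j)) e2 -!enorm_sqr e1 HX1.
  ring.
have HC : forall j, C j = 1 - m.
  move=> j; have [e1 e2] := H0 j.
  by have := HA j j; rewrite eqxx /affine_eval e2 /= => h; lra.
have Hdot : forall i j, i != j -> dotv (X i) (X j) = - n%:R^-1.
  move=> i j ij; have := HA i j; rewrite eq_sym (negbTE ij) /affine_eval HC HA' dotvZl /= mulr0n => e.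
  have e' : m * dotv (X i) (X j) = m - 1 by lra.
  have -> : dotv (X i) (X j) = (m * dotv (X i) (X j)) / m by field; rewrite gt_eqF.
  by rewrite e' /m; field; rewrite !gt_eqF.
have Hd : forall i j, i != j -> dotv (X i - X j) (X i - X j) = 2 + 2 * n%:R^-1.
  move=> i j ij; rewrite !(dotvBl, dotvBr) (dotvC (X j) (X i)) (Hdot i j ij) -!enorm_sqr !HX1.
  ring.
split=> // i1 j1 k1 l1 ij kl; by rewrite /enorm !Hd.
Qed.

Definition gam : R := Num.sqrt (n%:R^-1).
Definition alp : R := Num.sqrt ((n%:R + 1) / n%:R).
Definition bet : R := - (gam + alp) / n%:R.
Definition bb (j : 'I_n.+1) : R := if j == ord_max then gam else bet.
Definition Xr (j : 'I_n.+1) : 'rV[R]_n := \row_i (alp * ((i : nat) == j)%:R + bb j).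

Lemma sum_ind (k : nat) : \sum_(i < n) (((i : nat) == k)%:R : R) = (k < n)%N%:R.
Proof.
case: (ltnP k n) => hk.
  rewrite (bigD1 (Ordinal hk)) //= eqxx big1 ?addr0 // => i hi.
  by rewrite (_ : ((i : nat) == k) = false) //; apply/negbTE; apply: contra hi => /eqP e; apply/eqP/val_inj.
rewrite big1 // => i _; rewrite (_ : ((i : nat) == k) = false) //.
by apply/negbTE; apply: contraTneq (ltn_ord i) => ->; rewrite -leqNgt.
Qed.

Lemma sum_ind2 (j k : nat) : \sum_(i < n) (((i : nat) == j)%:R * ((i : nat) == k)%:R : R) =
   ((j == k) && (j < n)%N)%:R.
Proof.
have [->|jk] := eqVneq j k.
  by rewrite -(sum_ind k); apply: eq_bigr => i _; case: (_ == _); rewrite ?mulr1 ?mulr0.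
rewrite big1 // => i _; case: eqP => [ij|]; last by rewrite mul0r.
by case: eqP => [ik|]; [move: jk; rewrite -ij -ik eqxx | rewrite mulr0].
Qed.

Lemma natr_t : (true%:R : R) = 1. Proof. by []. Qed.
Lemma natr_f : (false%:R : R) = 0. Proof. by []. Qed.
Hypothesis n0 : (0 < n)%N.

Lemma np : 0 < n%:R :> R. Proof. by rewrite ltr0n. Qed.
Lemma gam2 : gam ^+ 2 = n%:R^-1.
Proof. by rewrite sqr_sqrtr // invr_ge0 ler0n. Qed.
Lemma alp2 : alp ^+ 2 = (n%:R + 1) / n%:R.
Proof. by rewrite sqr_sqrtr // divr_ge0 // ?addr_ge0 ?ler0n. Qed.

Lemma gram j k : dotv (Xr j) (Xr k) = (1 + n%:R^-1) * (j == k)%:R - n%:R^-1.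
Proof.
have nz : n%:R != 0 :> R by rewrite gt_eqF // np.
have e : dotv (Xr j) (Xr k) =
  alp ^+ 2 * ((j == k :> nat) && (j < n)%N)%:R + alp * bb k * (j < n)%N%:R +
  alp * bb j * (k < n)%N%:R + n%:R * (bb j * bb k).
  rewrite /dotv.
  under eq_bigr => i _ do rewrite !mxE.
  have -> : \sum_(i < n) ((alp * ((i : nat) == j)%:R + bb j) * (alp * ((i : nat) == k)%:R + bb k)) =
     \sum_(i < n) (alp ^+ 2 * (((i : nat) == j)%:R * ((i : nat) == k)%:R) +
       alp * bb k * ((i : nat) == j)%:R + alp * bb j * ((i : nat) == k)%:R + bb j * bb k).
    by apply: eq_bigr => i _; ring.
  rewrite !big_split /= -!mulr_sumr sum_ind2 !sum_ind sumr_const card_ord mulr_natl.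
  by rewrite [bb j * (bb k *+ n)]mulrnAr.
rewrite e.
have ltm : forall l : 'I_n.+1, (l < n)%N = (l != ord_max).
  move=> l; rewrite -(inj_eq val_inj) /=; have := ltn_ord l; case: (ltngtP l n) => //.
  by move=> h1; rewrite ltnS => h2; have := leq_trans h1 h2; rewrite ltnn.
have hb : forall l : 'I_n.+1, bb l = if l == ord_max then gam else bet by [].
rewrite !ltm !hb.
have hjk : (j == k :> nat) = (j == k) by [].
rewrite hjk.
have a2 := alp2; have g2 := gam2.
case hj: (j == ord_max); case hk: (k == ord_max) => /=; rewrite ?natr_t ?natr_f.
- have -> : j == k by rewrite (eqP hj) (eqP hk).
  apply: (@eq_trans _ _ (n%:R * gam ^+ 2)); first by rewrite /=; ring.
  by rewrite g2 ?natr_t ?natr_f; field; rewrite ?nz.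
- have -> : (j == k) = false by rewrite (eqP hj) eq_sym hk.
  apply: (@eq_trans _ _ (- gam ^+ 2)); first by rewrite /= /bet; field; rewrite ?nz.
  by rewrite g2 ?natr_t ?natr_f; field; rewrite ?nz.
- have -> : (j == k) = false by rewrite (eqP hk) hj.
  apply: (@eq_trans _ _ (- gam ^+ 2)); first by rewrite /= /bet; field; rewrite ?nz.
  by rewrite g2 ?natr_t ?natr_f; field; rewrite ?nz.
- case: (j == k) => /=; rewrite ?natr_t ?natr_f.
    apply: (@eq_trans _ _ (alp ^+ 2 + (gam ^+ 2 - alp ^+ 2) / n%:R)); first by rewrite /bet; field; rewrite ?nz.
    by rewrite g2 a2 ?natr_t ?natr_f; field; rewrite ?nz.
  apply: (@eq_trans _ _ ((gam ^+ 2 - alp ^+ 2) / n%:R)); first by rewrite /bet; field; rewrite ?nz.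
  by rewrite g2 a2 ?natr_t ?natr_f; field; rewrite ?nz.
Qed.

Lemma sum_delta (I : finType) (P : pred I) (F : I -> R) i :
  \sum_(k | P k) F k * (i == k)%:R = (P i)%:R * F i.
Proof.
rewrite big_mkcond (bigD1 i) //= eqxx mulr1 big1 ?addr0.
  by case: (P i); rewrite ?mul1r ?mul0r.
by move=> k; rewrite eq_sym => /negbTE ->; rewrite mulr0; case: (P k).
Qed.

Lemma Xr_ball j : enorm (Xr j) = 1.
Proof.
rewrite /enorm gram eqxx natr_t mulr1 addrK; exact: sqrtr1.
Qed.

Lemma dotv_sumlZ (I : finType) (c : I -> R) (F : I -> 'rV[R]_n) Y :
  dotv (\sum_j c j *: F j) Y = \sum_j c j * dotv (F j) Y.
Proof. by rewrite dotv_suml; apply: eq_bigr => j _; rewrite dotvZl. Qed.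

Lemma Xr_nondeg : nondeg_simplex Xr.
Proof.
apply/negP => /det0P [v v0 vM].
set W := \sum_j v 0 j *: Xr j.
have W0 : W = 0.
  apply/rowP => i; rewrite summxE mxE.
  have := congr1 (fun A : 'rV[R]_n.+1 => A 0 (widen_ord (leqnSn n) i)) vM.
  rewrite /= !mxE => h; apply: etrans h.
  by apply: eq_bigr => j _; rewrite nm_widen !mxE.
have S0 : \sum_j v 0 j = 0.
  have := congr1 (fun A : 'rV[R]_n.+1 => A 0 ord_max) vM.
  rewrite /= !mxE => h; apply: etrans h.
  by apply: eq_bigr => j _; rewrite nm_max mulr1.
have : dotv W W = (1 + n%:R^-1) * \sum_j v 0 j ^+ 2.
  rewrite {1}/W dotv_sumlZ mulr_sumr; apply: eq_bigr => j _.
  rewrite dotvC /W dotv_sumlZ.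
  under eq_bigr => k _ do rewrite dotvC gram mulrBr mulrCA.
  rewrite sumrB -mulr_suml S0 mul0r subr0 -mulr_sumr.
  rewrite (eq_bigr (fun k => v 0 k * (j == k)%:R)); last by move=> k _; rewrite mulrC.
  by rewrite sum_delta natr_t mul1r expr2 mulrCA.
rewrite W0 dotv0l => /esym /eqP; rewrite mulf_eq0 => /orP [|].
  by rewrite gt_eqF // ltr_wpDr ?invr_ge0 ?ler0n.
rewrite psumr_eq0 => [/allP H|i _]; last by rewrite sqr_ge0.
move/eqP: v0; apply; apply/rowP => i; rewrite mxE; apply/eqP.
by have := H i (mem_index_enum _); rewrite sqrf_eq0.
Qed.

Definition mm : R := n%:R / (n%:R + 1).
Definition c0 : R := (n%:R + 1)^-1.
Definition lam (j : 'I_n.+1) (x : 'rV[R]_n) := affine_eval (mm *: Xr j) c0 x.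

Lemma Xr_delta j k : affine_eval (mm *: Xr j) c0 (Xr k) = (k == j)%:R.
Proof.
have nz : n%:R != 0 :> R by rewrite gt_eqF // np.
have nz1 : n%:R + 1 != 0 :> R by rewrite gt_eqF // ltr_wpDl // ?ler0n.
rewrite /affine_eval dotvZl gram eq_sym /mm /c0; field.
by rewrite nz nz1.
Qed.

Lemma dotv_sumlP (I : finType) (P : pred I) (F : I -> 'rV[R]_n) x :
  dotv (\sum_(i | P i) F i) x = \sum_(i | P i) dotv (F i) x.
Proof.
rewrite /dotv exchange_big /=; apply: eq_bigr => i _.
by rewrite summxE mulr_suml.
Qed.

Hypothesis n4 : (n <= 4)%N.

Lemma sum_abs x : in_ball x -> \sum_j `|lam j x| <= 3 - 4 / (n.+1)%:R.
Proof.
move=> xb.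
have nz : n%:R != 0 :> R by rewrite gt_eqF // np.
have kp : 0 < n%:R + 1 :> R by rewrite ltr_wpDl // ?ler0n.
have hk : (n.+1)%:R = n%:R + 1 :> R by rewrite -natr1.
have s1 : \sum_j lam j x = 1.
  have := @F3 Xr (fun j => mm *: Xr j) (fun _ => c0) Xr_nondeg Xr_delta 0 1 x.
  rewrite /affine_eval dotv0l addr0 => ->.
  by apply: eq_bigr => j _; rewrite dotv0l addr0 mul1r.
set P := [pred j | lam j x < 0].
have e1 : \sum_j `|lam j x| = 1 - 2 * \sum_(j | P j) lam j x.
  have s1' := s1; rewrite (bigID P) /= in s1'.
  rewrite (bigID P) /=.
  rewrite (eq_bigr (fun j => - lam j x)); last by move=> j hj; rewrite ltr0_norm.
  rewrite [X in _ + X = _](eq_bigr (fun j => lam j x)); last first.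
    by move=> j hj; rewrite ger0_norm // leNgt.
  rewrite sumrN; lra.
set V := \sum_(j | P j) Xr j.
set K : R := #|P|%:R.
have e2 : \sum_(j | P j) lam j x = c0 * K + mm * dotv V x.
  rewrite /lam /affine_eval big_split /= sumr_const -mulr_natr /V dotv_sumlP mulr_sumr.
  by congr (_ + _); apply: eq_bigr => j _; rewrite dotvZl.
have e3 : dotv V V = K * (1 + n%:R^-1 - K / n%:R).
  rewrite {1}/V dotv_sumlP.
  rewrite (eq_bigr (fun _ => 1 + n%:R^-1 - K / n%:R)); last first.
    move=> i hi; rewrite dotvC /V dotv_sumlP.
    under eq_bigr => j _ do rewrite dotvC gram.
    rewrite sumrB sum_delta hi natr_t mul1r sumr_const -[_ *+ #|_|]mulr_natr.
    by rewrite /K mulrC.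
  by rewrite sumr_const -[_ *+ #|_|]mulr_natr mulrC /K.
have kle : (#|P| <= n.+1)%N by have := max_card P; rewrite card_ord.
have nf := @natfact R n #|P| (introT andP (conj n0 n4)) kle.
rewrite -/K in nf.
have eV : 0 <= enorm V := enorm_ge0 V.
have eV2 : enorm V ^+ 2 = K * (1 + n%:R^-1 - K / n%:R) by rewrite enorm_sqr.
have hNe : n%:R * enorm V <= n%:R - 1 + K.
  rewrite -(@ler_pXn2r _ 2) ?nnegrE ?mulr_ge0 ?ler0n //; last first.
    have : (0 <= K) by rewrite ler0n.
    have : (1 <= n%:R :> R) by rewrite ler1n.
    lra.
  rewrite exprMn eV2.
  have -> : n%:R ^+ 2 * (K * (1 + n%:R^-1 - K / n%:R)) = n%:R * K * (n%:R + 1 - K).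
    by field.
  exact: nf.
have ht : - dotv V x <= enorm V.
  have h1 : - dotv V x <= `|dotv V x| by rewrite -normrN ler_norm.
  apply: le_trans h1 _; apply: le_trans (CS _ _) _; by rewrite ler_piMr ?enorm_ge0.
rewrite e1 e2 hk /c0 /mm.
rewrite -(ler_pM2l kp).
have -> : (n%:R + 1) * (3 - 4 / (n%:R + 1)) = 3 * n%:R - 1 :> R by field; rewrite gt_eqF.
have -> : (n%:R + 1) * (1 - 2 * ((n%:R + 1)^-1 * K + n%:R / (n%:R + 1) * dotv V x)) =
   n%:R + 1 - 2 * K - 2 * (n%:R * dotv V x) :> R by field; rewrite gt_eqF.
have : 0 <= n%:R :> R by rewrite ler0n.
nra.
Qed.

Lemma Xr_norm : proj_norm Xr <= 3 - 4 / (n.+1)%:R.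
Proof.
rewrite /proj_norm; apply: ge_sup.
  exists 0, (fun _ => 0), 0, 0, 0; split.
  - by move=> x _ e e0; exists 1 => // y _ _; rewrite subrr normr0.
  - by move=> y _; rewrite normr0.
  - by move=> j; rewrite aff00.
  - by rewrite /in_ball enorm0.
  - by rewrite aff00 normr0.
move=> r [f [a [c [x [_ fb fi xb ->]]]]].
rewrite (@F3 Xr (fun j => mm *: Xr j) (fun _ => c0) Xr_nondeg Xr_delta a c x).
have hs := sum_abs x xb; rewrite /lam in hs.
apply: le_trans (ler_norm_sum _ _ _) _; apply: le_trans hs.
apply: ler_sum => j _; rewrite normrM fi -[X in _ <= X]mul1r.
by rewrite ler_wpM2r ?normr_ge0 // fb // /in_ball Xr_ball.
Qed.
End S.

Local Open Scope classical_set_scope.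
Theorem mainTheorem14 (R : realType) (n : nat) :
  (1 <= n <= 4)%N ->
  theta_ball R n = 3 - 4 / (n.+1)%:R /\
  (forall X : 'I_n.+1 -> 'rV[R]_n,
     nondeg_simplex X -> nodes_in_ball X ->
     proj_norm X = theta_ball R n -> regular_inscribed X).
Proof.
move=> /andP [n0 n4].
have th : theta_ball R n = 3 - 4 / (n.+1)%:R.
  have ne : [set r | exists X : 'I_n.+1 -> 'rV[R]_n,
        [/\ nondeg_simplex X, nodes_in_ball X & r = proj_norm X] ] !=set0.
    exists (proj_norm (Xr R n)), (Xr R n); split => //.
      exact: Xr_nondeg.
    by move=> j; rewrite /in_ball Xr_ball.
  have lb : lbound [set r | exists X : 'I_n.+1 -> 'rV[R]_n,
        [/\ nondeg_simplex X, nodes_in_ball X & r = proj_norm X] ] (3 - 4 / (n.+1)%:R).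
    by move=> r [X [nd inb ->]]; apply: lower.
  apply/eqP; rewrite eq_le; apply/andP; split; last exact: lb_le_inf.
  apply: (le_trans _ (@Xr_norm R n n0 n4)).
  apply: (ge_inf (ex_intro _ _ lb)).
  exists (Xr R n); split => //; first exact: Xr_nondeg.
  by move=> j; rewrite /in_ball Xr_ball.
split=> // X nd inb; rewrite th; exact: eq_case.
Qed.
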